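(* The graph isomorphism problem ($\mathsf{GI}$) reduces in polynomial time to the subpopulation Boolean function isomorphism problem ($\mathsf{SubIso}$).
   Context: $\mathsf{GI}$: given two undirected graphs $G$ and $H$ on the vertex set $\{1,\dots,n\}$, decide whether there is a permutation $\pi$ of $\{1,\dots,n\}$ with $\{u,v\}\in E(G)\iff\{\pi(u),\pi(v)\}\in E(H)$. A subpopulation of a node set $V=\{v_1,\dots,v_n\}$ is a subset $S\subseteq V$, encoded as the bit string $x\in\{0,1\}^n$ with $x_i=1$ iff $v_i\in S$; a collection of subpopulations is encoded as the Boolean function $f:\{0,1\}^n\to\{0,1\}$ taking value $1$ exactly on the encodings of the subpopulations in the collection. $\mathsf{SubIso}$: given two Boolean functions $f,g:\{0,1\}^n\to\{0,1\}$ (each given by the collection of subpopulations on which it equals $1$), decide whether there is a permutation $\pi\in S_n$ such that $f(x)=g(\pi(x))$ for all $x\in\{0,1\}^n$, where $\pi(x)$ is the bit string whose $i$-th coordinate is $x_{\pi(i)}$. *)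

(* Defs.v *)
From mathcomp Require Import all_boot all_fingroup.
Set Implicit Arguments. Unset Strict Implicit. Unset Printing Implicit Defensive.

Definition word := seq bool.

(* Polynomial-time computable functions on words, via the              *)
(* Bellantoni-Cook function algebra (safe recursion on notation),      *)
(* which characterizes exactly FP [Bellantoni-Cook 1992].              *)
(* A word b0 :: b1 :: ... is read with its first bit as the low-order  *)
(* bit; S_b prepends a bit, P removes the first bit.                   *)
(* Functions take normal arguments xs and safe arguments as_;          *)
(* missing arguments default to the empty word.                        *)
Inductive bc : Type :=
  | BZero
  | BProj (safe : bool) (j : nat)
  | BSucc (b : bool)
  | BPred
  | BCond
  | BRec (g h0 h1 : bc)
  | BComp (h : bc) (rs ts : seq bc).

Fixpoint bc_eval (p : bc) (xs as_ : seq word) {struct p} : word :=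
  match p with
  | BZero => [::]
  | BProj false j => nth [::] xs j
  | BProj true j => nth [::] as_ j
  | BSucc b => b :: nth [::] as_ 0
  | BPred => behead (nth [::] as_ 0)
  | BCond => if head false (nth [::] as_ 0) then nth [::] as_ 2 else nth [::] as_ 1
  | BRec g h0 h1 =>
      let fix rec (y : word) : word :=
        match y with
        | [::] => bc_eval g (behead xs) as_
        | b :: y' => bc_eval (if b then h1 else h0) (y' :: behead xs) (rec y' :: as_)
        end in
      rec (nth [::] xs 0)
  | BComp h rs ts =>
      bc_eval h (map (fun r => bc_eval r xs [::]) rs) (map (fun t => bc_eval t xs as_) ts)
  end.

Definition poly_time_computable (f : word -> word) : Prop :=
  exists p : bc, forall w : word, bc_eval p [:: w] [::] = f w.

Definition poly_reduces (L1 L2 : word -> Prop) : Prop :=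
  exists R : word -> word, poly_time_computable R /\ forall w, L1 w <-> L2 (R w).

Definition enc_unary (n : nat) : word := nseq n true ++ [:: false].

Definition enc_adj n (G : rel 'I_n) : word :=
  flatten [seq [seq G i j | j <- enum 'I_n] | i <- enum 'I_n].

(* simple undirected graph on vertex set 'I_n (= {1..n} shifted) *)
Definition simple_graph n (G : rel 'I_n) : Prop := symmetric G /\ irreflexive G.

Definition graph_iso n (G H : rel 'I_n) : Prop :=
  exists pi : {perm 'I_n}, forall u v, G u v = H (pi u) (pi v).

Definition enc_GI n (G H : rel 'I_n) : word := enc_unary n ++ enc_adj G ++ enc_adj H.

Definition GI_lang (w : word) : Prop :=
  exists n (G H : rel 'I_n),
    [/\ simple_graph G, simple_graph H, w = enc_GI G H & graph_iso G H].

(* subpopulations are bit strings x in {0,1}^n *)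
Definition bits n := {ffun 'I_n -> bool}.
Definition enc_bits n (x : bits n) : word := [seq x i | i <- enum 'I_n].

Definition perm_bits n (pi : {perm 'I_n}) (x : bits n) : bits n := [ffun i => x (pi i)].

(* a collection (list, duplicates/order irrelevant) of subpopulations; each
   element is marked by a leading 'true', the list is terminated by 'false' *)
Definition enc_coll n (s : seq (bits n)) : word :=
  flatten [seq true :: enc_bits x | x <- s] ++ [:: false].

Definition enc_SubIso n (s1 s2 : seq (bits n)) : word :=
  enc_unary n ++ enc_coll s1 ++ enc_coll s2.

(* f = indicator of s1, g = indicator of s2; f(x) = g(pi(x)) for all x *)
Definition subiso n (s1 s2 : seq (bits n)) : Prop :=
  exists pi : {perm 'I_n}, forall x : bits n, (x \in s1) = (perm_bits pi x \in s2).

Definition SubIso_lang (w : word) : Prop :=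
  exists n (s1 s2 : seq (bits n)), w = enc_SubIso s1 s2 /\ subiso s1 s2.

(* Main.v *)
Require Import Defs.
From mathcomp Require Import all_boot all_fingroup.
From mathcomp Require Import zify.
Set Implicit Arguments. Unset Strict Implicit. Unset Printing Implicit Defensive.

Lemma rec_nil g h0 h1 xs as_ : bc_eval (BRec g h0 h1) ([::] :: xs) as_ = bc_eval g xs as_.
Proof. reflexivity. Qed.
Lemma rec_cons g h0 h1 b y xs as_ : bc_eval (BRec g h0 h1) ((b :: y) :: xs) as_ =
  bc_eval (if b then h1 else h0) (y :: xs) (bc_eval (BRec g h0 h1) (y :: xs) as_ :: as_).
Proof. reflexivity. Qed.
Lemma rec_consT g h b y xs as_ : bc_eval (BRec g h h) ((b :: y) :: xs) as_ =
  bc_eval h (y :: xs) (bc_eval (BRec g h h) (y :: xs) as_ :: as_).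
Proof. by rewrite rec_cons; case: b. Qed.

Definition fl (b : bool) : word := if b then [:: true] else [::].
Definition hb p xs as_ := head false (bc_eval p xs as_).

Definition P0 := BProj false 0. Definition P1 := BProj false 1.
Definition P2 := BProj false 2. Definition P3 := BProj false 3.
Definition P4 := BProj false 4. Definition P5 := BProj false 5.
Definition S0 := BProj true 0.

Definition TRUEF := BComp (BSucc true) [::] [::].
Definition FALSEW := BComp (BSucc false) [::] [::].
Definition IF f a b := BComp BCond [::] [:: f; b; a].
Definition NOT f := IF f BZero TRUEF.
Definition AND f g := IF f (IF g TRUEF BZero) BZero.
Definition OR f g := IF f TRUEF (IF g TRUEF BZero).
Definition XNOR f g := IF f (IF g TRUEF BZero) (NOT g).

Lemma IF_eval f a b xs as_ : bc_eval (IF f a b) xs as_ =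
  if hb f xs as_ then bc_eval a xs as_ else bc_eval b xs as_.
Proof. by []. Qed.
Lemma NOT_eval f xs as_ : bc_eval (NOT f) xs as_ = fl (~~ hb f xs as_).
Proof. by rewrite /NOT IF_eval; case: hb. Qed.
Lemma AND_eval f g xs as_ : bc_eval (AND f g) xs as_ = fl (hb f xs as_ && hb g xs as_).
Proof. by rewrite /AND !IF_eval; case: hb; case: hb. Qed.
Lemma OR_eval f g xs as_ : bc_eval (OR f g) xs as_ = fl (hb f xs as_ || hb g xs as_).
Proof. by rewrite /OR !IF_eval; case: hb; case: hb. Qed.
Lemma XNOR_eval f g xs as_ : bc_eval (XNOR f g) xs as_ = fl (hb f xs as_ == hb g xs as_).
Proof. by rewrite /XNOR /NOT !IF_eval /hb; case: (head false (bc_eval f _ _)); case: (head false (bc_eval g _ _)). Qed.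
Lemma hb_fl p xs as_ b : bc_eval p xs as_ = fl b -> hb p xs as_ = b.
Proof. by rewrite /hb => ->; case: b. Qed.

Definition ONES := BRec BZero (BSucc true) (BSucc true).
Lemma ONES_eval x xs as_ : bc_eval ONES (x :: xs) as_ = nseq (size x) true.
Proof. elim: x => [|b x IH] //; by rewrite {1}/ONES rec_consT -/ONES IH. Qed.

Fixpoint lead (w : word) : nat := if w is b :: w' then (if b then (lead w').+1 else 0) else 0.
Definition LEAD := BRec BZero BZero (BSucc true).
Lemma LEAD_eval x xs as_ : bc_eval LEAD (x :: xs) as_ = nseq (lead x) true.
Proof. elim: x => [|[] x IH] //; by rewrite {1}/LEAD rec_cons -/LEAD IH. Qed.

Definition APP := BRec S0 (BSucc false) (BSucc true).
Lemma APP_eval x y xs as_ : bc_eval APP (x :: xs) (y :: as_) = x ++ y.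
Proof. elim: x => [|[] x IH] //; by rewrite {1}/APP rec_cons -/APP IH. Qed.

Definition DROP := BRec S0 BPred BPred.
Lemma DROP_eval x y xs as_ : bc_eval DROP (x :: xs) (y :: as_) = drop (size x) y.
Proof.
elim: x => [|b x IH]; first by rewrite /= drop0.
by rewrite {1}/DROP rec_consT -/DROP IH /= -add1n -drop_drop drop1.
Qed.

Definition MUL := BRec BZero (BComp APP [:: P1] [:: S0]) (BComp APP [:: P1] [:: S0]).
Lemma MUL_eval x m xs as_ : bc_eval MUL (x :: nseq m true :: xs) as_ = nseq (size x * m) true.
Proof.
elim: x => [|b x IH] //; rewrite {1}/MUL rec_consT -/MUL.
rewrite IH.
have -> : forall ys, bc_eval (BComp APP [:: P1] [:: S0]) [:: x, nseq m true & xs]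
     (ys :: as_) = nseq m true ++ ys by move=> ys; exact: APP_eval.
by rewrite -nseqD mulSn.
Qed.

Definition cat2 p q := BComp APP [:: p] [:: q].
Lemma cat2_eval p q xs as_ : bc_eval (cat2 p q) xs as_ = bc_eval p xs [::] ++ bc_eval q xs as_.
Proof. exact: APP_eval. Qed.
Definition dropP p q := BComp DROP [:: p] [:: q].
Lemma dropP_eval p q xs as_ : bc_eval (dropP p q) xs as_ = drop (size (bc_eval p xs [::])) (bc_eval q xs as_).
Proof. exact: DROP_eval. Qed.
Definition mulP p q := BComp MUL [:: p; q] [::].
Lemma mulP_eval p q xs as_ m : bc_eval q xs [::] = nseq m true ->
  bc_eval (mulP p q) xs as_ = nseq (size (bc_eval p xs [::]) * m) true.
Proof. by move=> Hq; rewrite -(MUL_eval (bc_eval p xs [::]) m [::] [::]) -Hq. Qed.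
Definition onesP p := BComp ONES [:: p] [::].
Lemma onesP_eval p xs as_ : bc_eval (onesP p) xs as_ = nseq (size (bc_eval p xs [::])) true.
Proof. exact: ONES_eval. Qed.

Definition LT p q := IF (dropP p (onesP q)) TRUEF BZero.
Lemma LT_eval p q xs as_ : bc_eval (LT p q) xs as_ =
  fl (size (bc_eval p xs [::]) < size (bc_eval q xs [::])).
Proof.
rewrite /LT IF_eval /hb dropP_eval onesP_eval drop_nseq.
by case: (size (bc_eval q xs [::]) - _) (subn_gt0 (size (bc_eval p xs [::])) (size (bc_eval q xs [::]))) => [|k] /= <-.
Qed.
Definition EQL p q := AND (NOT (LT p q)) (NOT (LT q p)).
Lemma EQL_eval p q xs as_ : bc_eval (EQL p q) xs as_ =
  fl (size (bc_eval p xs [::]) == size (bc_eval q xs [::])).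
Proof.
rewrite /EQL AND_eval !(hb_fl (NOT_eval _ _ _)) /hb !LT_eval.
by case: ltngtP.
Qed.
Definition BITAT p src := IF (dropP p src) TRUEF BZero.
Lemma BITAT_eval p src xs as_ : bc_eval (BITAT p src) xs as_ =
  fl (nth false (bc_eval src xs as_) (size (bc_eval p xs [::]))).
Proof.
rewrite /BITAT IF_eval /hb dropP_eval -nth0 nth_drop addn0.
by case: nth.
Qed.
Definition POS off k l U := cat2 off (cat2 (mulP k U) l).
Lemma POS_size off k l U xs n : bc_eval U xs [::] = nseq n true ->
  size (bc_eval (POS off k l U) xs [::]) =
  size (bc_eval off xs [::]) + (size (bc_eval k xs [::]) * n + size (bc_eval l xs [::])).
Proof.
by move=> HU; rewrite /POS !cat2_eval !size_cat (mulP_eval _ _ HU) size_nseq.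
Qed.

Lemma hbNOT f xs as_ : hb (NOT f) xs as_ = ~~ hb f xs as_.
Proof. by rewrite /hb NOT_eval -/(hb _ _ _); case: hb. Qed.
Lemma hbAND f g xs as_ : hb (AND f g) xs as_ = hb f xs as_ && hb g xs as_.
Proof. by rewrite {1}/hb AND_eval; case: (_ && _). Qed.
Lemma hbOR f g xs as_ : hb (OR f g) xs as_ = hb f xs as_ || hb g xs as_.
Proof. by rewrite {1}/hb OR_eval; case: (_ || _). Qed.
Lemma hbXNOR f g xs as_ : hb (XNOR f g) xs as_ = (hb f xs as_ == hb g xs as_).
Proof. by rewrite {1}/hb XNOR_eval; case: (_ == _). Qed.
Lemma hbEQL p q xs as_ : hb (EQL p q) xs as_ = (size (bc_eval p xs [::]) == size (bc_eval q xs [::])).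
Proof. by rewrite /hb EQL_eval; case: (_ == _). Qed.
Lemma hbBITAT p src xs as_ : hb (BITAT p src) xs as_ =
  nth false (bc_eval src xs as_) (size (bc_eval p xs [::])).
Proof. by rewrite /hb BITAT_eval; case: nth. Qed.

Definition INDREC := BRec BZero
  (IF (OR (EQL P0 P1) (EQL P0 P2)) (BComp (BSucc true) [::] [:: S0]) (BComp (BSucc false) [::] [:: S0]))
  (IF (OR (EQL P0 P1) (EQL P0 P2)) (BComp (BSucc true) [::] [:: S0]) (BComp (BSucc false) [::] [:: S0])).
Fixpoint indf m a b : word := if m is m'.+1 then ((m' == a) || (m' == b)) :: indf m' a b else [::].
Lemma INDREC_eval m a b xs as_ : bc_eval INDREC (nseq m true :: a :: b :: xs) as_ = indf m (size a) (size b).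
Proof.
elim: m => [|m IH] //.
rewrite {1}/INDREC [nseq _ _]/= rec_consT -/INDREC IH IF_eval hbOR !hbEQL /= size_nseq.
by case: (_ || _).
Qed.

Definition IND a b U := BComp INDREC [:: U; dropP a (BComp BPred [::] [:: U]); dropP b (BComp BPred [::] [:: U])] [::].
Lemma IND_eval a b U xs as_ n : bc_eval U xs [::] = nseq n true ->
  bc_eval (IND a b U) xs as_ =
  indf n (n.-1 - size (bc_eval a xs [::])) (n.-1 - size (bc_eval b xs [::])).
Proof.
move=> HU.
have Hd : forall c, bc_eval (dropP c (BComp BPred [::] [:: U])) xs [::] =
   drop (size (bc_eval c xs [::])) (nseq n.-1 true).
  move=> c; rewrite dropP_eval; congr drop.
  by rewrite -[bc_eval (BComp BPred [::] [:: U]) xs [::]]/(behead (bc_eval U xs [::])) HU; case: n HU.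
transitivity (bc_eval INDREC [:: bc_eval U xs [::];
   bc_eval (dropP a (BComp BPred [::] [:: U])) xs [::];
   bc_eval (dropP b (BComp BPred [::] [:: U])) xs [::]] [::]); first by [].
by rewrite !Hd HU INDREC_eval !size_drop size_nseq.
Qed.

Fixpoint innerf (f : nat -> nat -> bool) n k m : word :=
  if m is l.+1 then (if f k l then true :: indf n (n.-1 - k) (n.-1 - l) else [::]) ++ innerf f n k l
  else [::].
Definition hI := IF (BITAT (POS P4 P1 P0 P2) P3) (cat2 (BComp (BSucc true) [::] [:: IND P1 P0 P2]) S0) S0.
Definition INNERREC := BRec BZero hI hI.
Lemma INNERREC_eval m k n w off xs as_ :
  bc_eval INNERREC (nseq m true :: k :: nseq n true :: w :: off :: xs) as_ =
  innerf (fun a b => nth false w (size off + (a * n + b))) n (size k) m.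
Proof.
elim: m => [|m IH] //.
rewrite {1}/INNERREC [nseq m.+1 _]/= rec_consT -/INNERREC IH /hI IF_eval hbBITAT.
rewrite (@POS_size _ _ _ _ _ n) //.
rewrite -[bc_eval P4 _ _]/off -[bc_eval P1 _ _]/k -[bc_eval P0 _ _]/(nseq m true) -[bc_eval P3 _ _]/w size_nseq.
case E: nth; last by rewrite /= E.
rewrite cat2_eval.
rewrite -[bc_eval (BComp (BSucc true) _ _) _ _]/(true :: bc_eval (IND P1 P0 P2) (nseq m true :: k :: nseq n true :: w :: off :: xs) [::]).
rewrite (@IND_eval _ _ _ _ _ n) //.
by rewrite -[bc_eval P1 _ _]/k -[bc_eval P0 _ _]/(nseq m true) size_nseq /= E.
Qed.

Fixpoint collf (f : nat -> nat -> bool) n m : word :=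
  if m is k.+1 then innerf f n k n ++ collf f n k else [::].
Definition hO := cat2 (BComp INNERREC [:: P1; P0; P1; P2; P3] [::]) S0.
Definition COLLREC := BRec BZero hO hO.
Lemma COLLREC_eval m n w off xs as_ :
  bc_eval COLLREC (nseq m true :: nseq n true :: w :: off :: xs) as_ =
  collf (fun a b => nth false w (size off + (a * n + b))) n m.
Proof.
elim: m => [|m IH] //.
rewrite {1}/COLLREC [nseq m.+1 _]/= rec_consT -/COLLREC IH /hO cat2_eval.
transitivity (bc_eval INNERREC [:: nseq n true; nseq m true; nseq n true; w; off] [::] ++
   collf (fun a b => nth false w (size off + (a * n + b))) n m); first by [].
by rewrite INNERREC_eval size_nseq.
Qed.

Lemma hbS0 xs b as_ : hb S0 xs (fl b :: as_) = b.
Proof. by case: b. Qed.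

Fixpoint ichk (fA fB : nat -> nat -> bool) k m : bool :=
  if m is l.+1 then [&& fA k l == fA l k, fB k l == fB l k & ichk fA fB k l] else true.
Definition hJ := AND (XNOR (BITAT (POS P4 P1 P0 P2) P3) (BITAT (POS P4 P0 P1 P2) P3))
   (AND (XNOR (BITAT (POS P5 P1 P0 P2) P3) (BITAT (POS P5 P0 P1 P2) P3)) S0).
Definition ICHKREC := BRec TRUEF hJ hJ.
Lemma ICHKREC_eval m k n w o1 o2 xs as_ :
  bc_eval ICHKREC (nseq m true :: k :: nseq n true :: w :: o1 :: o2 :: xs) as_ =
  fl (ichk (fun a b => nth false w (size o1 + (a * n + b)))
           (fun a b => nth false w (size o2 + (a * n + b))) (size k) m).
Proof.
elim: m => [|m IH] //.
rewrite {1}/ICHKREC [nseq m.+1 _]/= rec_consT -/ICHKREC IH /hJ AND_eval hbAND !hbXNOR hbS0 !hbBITAT.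
rewrite !(@POS_size _ _ _ _ _ n) //.
by rewrite -[bc_eval P4 _ _]/o1 -[bc_eval P5 _ _]/o2 -[bc_eval P1 _ _]/k
  -[bc_eval P0 _ _]/(nseq m true) -[bc_eval P3 _ _]/w size_nseq.
Qed.

Fixpoint chk (fA fB : nat -> nat -> bool) n m : bool :=
  if m is k.+1 then [&& ~~ fA k k, ~~ fB k k, ichk fA fB k n & chk fA fB n k] else true.
Definition hK := AND (NOT (BITAT (POS P3 P0 P0 P1) P2))
  (AND (NOT (BITAT (POS P4 P0 P0 P1) P2)) (AND (BComp ICHKREC [:: P1; P0; P1; P2; P3; P4] [::]) S0)).
Definition CHKREC := BRec TRUEF hK hK.
Lemma CHKREC_eval m n w o1 o2 xs as_ :
  bc_eval CHKREC (nseq m true :: nseq n true :: w :: o1 :: o2 :: xs) as_ =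
  fl (chk (fun a b => nth false w (size o1 + (a * n + b)))
          (fun a b => nth false w (size o2 + (a * n + b))) n m).
Proof.
elim: m => [|m IH] //.
rewrite {1}/CHKREC [nseq m.+1 _]/= rec_consT -/CHKREC IH /hK AND_eval !hbAND !hbNOT hbS0 !hbBITAT.
rewrite !(@POS_size _ _ _ _ _ n) //.
rewrite -[bc_eval P3 _ _]/o1 -[bc_eval P4 _ _]/o2 -[bc_eval P0 _ _]/(nseq m true)
  -[bc_eval P2 _ _]/w size_nseq.
have -> : hb (BComp ICHKREC [:: P1; P0; P1; P2; P3; P4] [::])
    [:: nseq m true, nseq n true, w, o1, o2 & xs] (fl (chk (fun a b => nth false w (size o1 + (a * n + b)))
          (fun a b => nth false w (size o2 + (a * n + b))) n m) :: as_) =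
  hb ICHKREC [:: nseq n true; nseq m true; nseq n true; w; o1; o2] [::] by [].
rewrite (hb_fl (ICHKREC_eval _ _ _ _ _ _ _ _)) size_nseq.
by [].
Qed.

Definition UN := BComp LEAD [:: P0] [::].
Definition OFF1 := cat2 UN TRUEF.
Definition NN := mulP UN UN.
Definition OFF2 := cat2 OFF1 NN.
Definition TOTAL := cat2 OFF2 NN.
Definition COLL off := cat2 (BComp COLLREC [:: UN; UN; P0; off] [::]) FALSEW.
Definition VALID := AND (EQL P0 TOTAL) (BComp CHKREC [:: UN; UN; P0; OFF1; OFF2] [::]).
Definition OUT := cat2 UN (BComp (BSucc false) [::] [:: cat2 (COLL OFF1) (COLL OFF2)]).
Definition RED := IF VALID OUT BZero.

Section Top.
Variable w : word.
Let n := lead w.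
Let fA a b := nth false w (n + 1 + (a * n + b)).
Let fB a b := nth false w (n + 1 + n * n + (a * n + b)).

Lemma UN_eval as_ : bc_eval UN [:: w] as_ = nseq n true.
Proof. exact: LEAD_eval. Qed.
Lemma OFF1_size : size (bc_eval OFF1 [:: w] [::]) = n + 1.
Proof. by rewrite cat2_eval UN_eval size_cat size_nseq. Qed.
Lemma NN_eval : bc_eval NN [:: w] [::] = nseq (n * n) true.
Proof. by rewrite /NN (@mulP_eval _ _ _ _ n) UN_eval // size_nseq. Qed.
Lemma OFF2_size : size (bc_eval OFF2 [:: w] [::]) = n + 1 + n * n.
Proof. by rewrite cat2_eval size_cat OFF1_size NN_eval size_nseq. Qed.
Lemma TOTAL_size : size (bc_eval TOTAL [:: w] [::]) = n + 1 + n * n + n * n.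
Proof. by rewrite cat2_eval size_cat OFF2_size NN_eval size_nseq. Qed.

Lemma COLL_eval off s as_ : size (bc_eval off [:: w] [::]) = s ->
  bc_eval (COLL off) [:: w] as_ = collf (fun a b => nth false w (s + (a * n + b))) n n ++ [:: false].
Proof.
move=> Hs; rewrite cat2_eval.
transitivity (bc_eval COLLREC [:: bc_eval UN [:: w] [::]; bc_eval UN [:: w] [::]; w; bc_eval off [:: w] [::]] [::] ++ [:: false]); first by [].
by rewrite UN_eval COLLREC_eval Hs.
Qed.

Lemma RED_eval : bc_eval RED [:: w] [::] =
  if (size w == n + 1 + n * n + n * n) && chk fA fB n n
  then nseq n true ++ false :: (collf fA n n ++ [:: false]) ++ (collf fB n n ++ [:: false])
  else [::].
Proof.
rewrite /RED IF_eval /VALID hbAND hbEQL TOTAL_size.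
have -> : hb (BComp CHKREC [:: UN; UN; P0; OFF1; OFF2] [::]) [:: w] [::] = chk fA fB n n.
  transitivity (hb CHKREC [:: bc_eval UN [:: w] [::]; bc_eval UN [:: w] [::]; w;
     bc_eval OFF1 [:: w] [::]; bc_eval OFF2 [:: w] [::]] [::]); first by [].
  by rewrite UN_eval (hb_fl (CHKREC_eval _ _ _ _ _ _ _)) OFF1_size OFF2_size.
case: (_ && _) => //.
rewrite /OUT cat2_eval UN_eval.
transitivity (nseq n true ++ false :: bc_eval (cat2 (COLL OFF1) (COLL OFF2)) [:: w] [::]); first by [].
by rewrite cat2_eval (COLL_eval _ OFF1_size) (COLL_eval _ OFF2_size).
Qed.
End Top.


Definition indv n (k l : nat) : bits n := [ffun i : 'I_n => (val i == k) || (val i == l)].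

Fixpoint Ein n f k m : seq (bits n) :=
  if m is l.+1 then (if f k l then [:: indv n k l] else [::]) ++ Ein n f k l else [::].
Fixpoint Eout n f m : seq (bits n) :=
  if m is k.+1 then Ein n f k n ++ Eout n f k else [::].

Lemma indf_iota m a b : indf m a b = [seq (m.-1 - p == a) || (m.-1 - p == b) | p <- iota 0 m].
Proof.
elim: m => [|m IH] //=.
rewrite subn0 IH -[1]/(1 + 0) iotaDl -map_comp; congr (_ :: _).
by apply: eq_map => p /=; have -> : m - (1 + p) = m.-1 - p by lia.
Qed.

Lemma enc_indv n k l : k < n -> l < n ->
  enc_bits (indv n k l) = indf n (n.-1 - k) (n.-1 - l).
Proof.
move=> Hk Hl; rewrite indf_iota /enc_bits -val_enum_ord -map_comp.
apply/eq_in_map => i _ /=; rewrite ffunE.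
have Hi := ltn_ord i.
have E : forall c, c < n -> (n.-1 - i == n.-1 - c) = (val i == c).
  by move=> c Hc; rewrite -subn1 -[val i]/(nat_of_ord i); apply/eqP/eqP; lia.
by rewrite !E.
Qed.

Lemma innerf_enc n f k m : k < n -> m <= n ->
  innerf f n k m = flatten [seq true :: enc_bits x | x <- Ein n f k m].
Proof.
move=> Hk; elim: m => [|m IH] Hm //=.
rewrite map_cat flatten_cat IH 1?ltnW //; case: (f k m) => //=.
by rewrite enc_indv // cats0.
Qed.

Lemma collf_enc n f m : m <= n ->
  collf f n m = flatten [seq true :: enc_bits x | x <- Eout n f m].
Proof.
elim: m => [|m IH] Hm //=.
by rewrite map_cat flatten_cat IH 1?ltnW // innerf_enc.
Qed.

Lemma mem_Ein n f k m x : x \in Ein n f k m <-> exists l, l < m /\ f k l /\ x = indv n k l.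
Proof.
elim: m => [|m IH] /=; first by split => // -[l []].
rewrite mem_cat; split.
  case/orP => [|/(proj1 IH) [l [Hl [Hf ->]]]]; last by exists l; split => //; exact: ltnW.
  by case E: (f k m) => //; rewrite inE => /eqP ->; exists m.
move=> [l [Hl [Hf Ex]]]; rewrite ltnS leq_eqVlt in Hl.
case/orP: Hl => [/eqP El|Hl]; first by subst l; rewrite Hf Ex mem_head.
by apply/orP; right; apply: (proj2 IH); exists l.
Qed.

Lemma mem_Eout n f m x : x \in Eout n f m <->
  exists k l, k < m /\ l < n /\ f k l /\ x = indv n k l.
Proof.
elim: m => [|m IH] /=; first by split => // -[k [l []]].
rewrite mem_cat; split.
  case/orP => [/(proj1 (mem_Ein _ _ _ _)) [l [Hl [Hf ->]]]|/(proj1 IH) [k [l [Hk [Hl [Hf ->]]]]]].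
    by exists m, l.
  by exists k, l; split => //; exact: ltnW.
move=> [k [l [Hk [Hl [Hf Ex]]]]]; rewrite ltnS leq_eqVlt in Hk.
case/orP: Hk => [/eqP Ek|Hk]; first by subst k; apply/orP; left; apply: (proj2 (mem_Ein _ _ _ _)); exists l.
by apply/orP; right; apply: (proj2 IH); exists k, l.
Qed.

Lemma mem_Eout' n f x : x \in Eout n f n <->
  exists k l : 'I_n, f k l /\ x = indv n k l.
Proof.
rewrite mem_Eout; split.
  by move=> [k [l [Hk [Hl [Hf ->]]]]]; exists (Ordinal Hk), (Ordinal Hl).
by move=> [k [l [Hf ->]]]; exists k, l.
Qed.

Lemma perm_bits_indv n (s : {perm 'I_n}) (k l : 'I_n) :
  perm_bits s (indv n k l) = indv n ((s^-1)%g k) ((s^-1)%g l).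
Proof.
apply/ffunP => i; rewrite !ffunE.
have E : forall c : 'I_n, (val (s i) == val c) = (val i == val ((s^-1)%g c)).
  by move=> c; exact: (canF_eq (permK s)).
by rewrite !E.
Qed.

Lemma perm_bitsK n (s : {perm 'I_n}) x : perm_bits (s^-1)%g (perm_bits s x) = x.
Proof. by apply/ffunP => i; rewrite !ffunE permKV. Qed.

Lemma indv_inj n (u v k l : 'I_n) : u != v -> indv n u v = indv n k l ->
  (k = u /\ l = v) \/ (k = v /\ l = u).
Proof.
move=> Huv E.
have Hu := congr1 (fun x : bits n => x u) E; have Hv := congr1 (fun x : bits n => x v) E.
have Hk := congr1 (fun x : bits n => x k) E; have Hl := congr1 (fun x : bits n => x l) E.
move: Hu Hv Hk Hl; rewrite !ffunE !eqxx /= !orbT => Hu Hv Hk Hl.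
case/orP: (esym Hu) => /eqP/ord_inj Eu; case/orP: (esym Hv) => /eqP/ord_inj Evv;
  move: Huv; rewrite Eu Evv => Huv; rewrite ?eqxx // in Huv; by [left | right].
Qed.

Lemma mem_indv n (f : nat -> nat -> bool) (sym : forall u v : 'I_n, f u v = f v u) (u v : 'I_n) : u != v ->
  f u v = (indv n u v \in Eout n f n).
Proof.
move=> Huv; apply/idP/idP => [H|/mem_Eout' [k [l [Hf E]]]].
  by apply/mem_Eout'; exists u, v.
by case: (indv_inj Huv E) => [[Ek El]|[Ek El]]; subst; rewrite // sym.
Qed.

Lemma key n (f g : nat -> nat -> bool)
  (sf : forall u v : 'I_n, f u v = f v u) (rf : forall u : 'I_n, f u u = false)
  (sg : forall u v : 'I_n, g u v = g v u) (rg : forall u : 'I_n, g u u = false) :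
  subiso (Eout n f n) (Eout n g n) <->
  exists pi : {perm 'I_n}, forall u v : 'I_n, f u v = g (pi u) (pi v).
Proof.
split.
  move=> [s Hs]; exists (s^-1)%g => u v.
  have [->|Huv] := eqVneq u v; first by rewrite rf rg.
  rewrite (mem_indv sf Huv) Hs perm_bits_indv -mem_indv //.
  by apply: contra Huv => /eqP /perm_inj ->.
move=> [pi Hpi]; exists (pi^-1)%g => x; apply/idP/idP.
  move=> /mem_Eout' [k [l [Hf ->]]]; rewrite perm_bits_indv invgK.
  by apply/mem_Eout'; exists (pi k), (pi l); rewrite -Hpi.
move=> /mem_Eout' [a [b [Hg E]]].
have -> : x = perm_bits pi (indv n a b) by rewrite -E -{1}(invgK pi) perm_bitsK.
rewrite perm_bits_indv; apply/mem_Eout'; exists ((pi^-1)%g a), ((pi^-1)%g b); split => //.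
by rewrite Hpi !permKV.
Qed.


Lemma ichkP fA fB k m : ichk fA fB k m <-> forall l, l < m -> fA k l = fA l k /\ fB k l = fB l k.
Proof.
elim: m => [|m IH] /=; first by split.
split.
  case/and3P => /eqP H1 /eqP H2 /IH H3 l; rewrite ltnS leq_eqVlt => /orP [/eqP ->|Hl] //.
  exact: H3.
move=> H; have [H1 H2] := H m (ltnSn m).
rewrite H1 H2 !eqxx /=; apply/IH => l Hl; apply: H; exact: ltnW.
Qed.

Lemma chkP fA fB n m : chk fA fB n m <-> forall k, k < m ->
  [/\ fA k k = false, fB k k = false & forall l, l < n -> fA k l = fA l k /\ fB k l = fB l k].
Proof.
elim: m => [|m IH] /=; first by split.
split.
  case/and4P => /negbTE H1 /negbTE H2 /ichkP H3 /IH H4 k; rewrite ltnS leq_eqVlt => /orP [/eqP ->|Hk] //.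
  exact: H4.
move=> H; have [H1 H2 H3] := H m (ltnSn m).
apply/and4P; split; [by rewrite H1 | by rewrite H2 | exact/ichkP |].
apply/IH => k Hk; apply: H; exact: ltnW.
Qed.

Lemma lead_enc n s : lead (nseq n true ++ false :: s) = n.
Proof. by elim: n => //= n ->. Qed.
Lemma take_lead w : take (lead w) w = nseq (lead w) true.
Proof. by elim: w => [|[] w IH] //=; rewrite IH. Qed.
Lemma nth_lead w : lead w < size w -> nth false w (lead w) = false.
Proof. by elim: w => [|[] w IH] //=. Qed.

Lemma nth_cat_r T (x0 : T) s1 s2 p : nth x0 (s1 ++ s2) (size s1 + p) = nth x0 s2 p.
Proof. by rewrite nth_cat ltnNge leq_addr /= addKn. Qed.

Lemma nth_flatten_rows T (x0 : T) n (s : seq (seq T)) i j :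
  all (fun r => size r == n) s -> j < n -> i < size s ->
  nth x0 (flatten s) (i * n + j) = nth x0 (nth [::] s i) j.
Proof.
elim: s i => [|r s IH] [|i] //= /andP [/eqP Hr Ha] Hj Hi.
  by rewrite nth_cat Hr Hj.
by rewrite mulSn -addnA -{1}Hr nth_cat_r IH.
Qed.
Lemma size_flatten_rows T n (s : seq (seq T)) :
  all (fun r => size r == n) s -> size (flatten s) = size s * n.
Proof. by elim: s => [|r s IH] //= /andP [/eqP Hr Ha]; rewrite size_cat IH // Hr mulSn. Qed.

Lemma nth_map_enum n T (f : 'I_n -> T) x0 (i : 'I_n) : nth x0 [seq f j | j <- enum 'I_n] i = f i.
Proof. rewrite (nth_map i). by rewrite nth_ord_enum. by rewrite size_enum_ord. Qed.

Section Adj.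
Variable n : nat.
Implicit Type G : 'I_n -> 'I_n -> bool.
Lemma rows_ok G : all (fun r => size r == n) [seq [seq G i j | j <- enum 'I_n] | i <- enum 'I_n].
Proof. by apply/allP => r /mapP [i _ ->]; rewrite size_map size_enum_ord. Qed.
Lemma size_enc_adj G : size (enc_adj G) = n * n.
Proof. by rewrite /enc_adj (size_flatten_rows (rows_ok G)) size_map size_enum_ord. Qed.
Lemma nth_enc_adj G (i j : 'I_n) : nth false (enc_adj G) (i * n + j) = G i j.
Proof.
have Hi : i < size [seq [seq G i j | j <- enum 'I_n] | i <- enum 'I_n] by rewrite size_map size_enum_ord.
by rewrite /enc_adj (nth_flatten_rows false (rows_ok G) (ltn_ord j) Hi) !nth_map_enum.
Qed.
Lemma adj_eq a G : size a = n * n -> (forall i j : 'I_n, nth false a (i * n + j) = G i j) ->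
  a = enc_adj G.
Proof.
move=> Sa Ha; apply: (@eq_from_nth _ false); first by rewrite size_enc_adj.
move=> p; rewrite Sa => Hp.
have n0 : 0 < n by case: n Hp => //; rewrite muln0.
have Hi : p %/ n < n by rewrite ltn_divLR.
have Hj : p %% n < n by rewrite ltn_pmod.
by rewrite {1 2}(divn_eq p n) (Ha (Ordinal Hi) (Ordinal Hj)) (nth_enc_adj G (Ordinal Hi) (Ordinal Hj)).
Qed.
End Adj.

Lemma size_enc_bits n (x : bits n) : size (enc_bits x) = n.
Proof. by rewrite size_map size_enum_ord. Qed.
Lemma enc_bits_inj n : injective (@enc_bits n).
Proof.
move=> x y E; apply/ffunP => i; have := congr1 (fun s => nth false s i) E.
by rewrite /enc_bits !nth_map_enum.
Qed.

Lemma enc_coll_cons n (x : bits n) s : enc_coll (x :: s) = true :: enc_bits x ++ enc_coll s.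
Proof. by rewrite /enc_coll /= -!catA. Qed.

Lemma enc_coll_inj n (s t : seq (bits n)) r1 r2 :
  enc_coll s ++ r1 = enc_coll t ++ r2 -> s = t /\ r1 = r2.
Proof.
elim: s t => [|x s IH] [|y t].
- by rewrite /enc_coll /= => -[->].
- by rewrite enc_coll_cons /enc_coll /= => -[].
- by rewrite enc_coll_cons /enc_coll /= => -[].
rewrite !enc_coll_cons /= => -[] /eqP; rewrite -!catA eqseq_cat ?size_enc_bits //.
case/andP => /eqP /enc_bits_inj -> /eqP E. have E' : enc_coll s ++ r1 = enc_coll t ++ r2 by rewrite /enc_coll -!catA.
by have [-> ->] := IH t E'.
Qed.

Lemma enc_SubIso_n n1 n2 (s1 s2 : seq (bits n1)) (t1 t2 : seq (bits n2)) :
  enc_SubIso s1 s2 = enc_SubIso t1 t2 -> n1 = n2.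
Proof.
have F : forall m (a b : seq (bits m)), enc_SubIso a b = nseq m true ++ false :: (enc_coll a ++ enc_coll b).
  by move=> m a b; rewrite /enc_SubIso /enc_unary -catA.
rewrite !F => E.
by rewrite -(lead_enc n1 (enc_coll s1 ++ enc_coll s2)) E lead_enc.
Qed.

Lemma enc_SubIso_inj n (s1 s2 t1 t2 : seq (bits n)) :
  enc_SubIso s1 s2 = enc_SubIso t1 t2 -> s1 = t1 /\ s2 = t2.
Proof.
rewrite /enc_SubIso => /eqP; rewrite eqseq_cat // => /andP [_ /eqP /enc_coll_inj [-> E]].
have E' : enc_coll s2 ++ [::] = enc_coll t2 ++ [::] by rewrite !cats0.
by have [-> _] := enc_coll_inj E'.
Qed.


Lemma out_enc n fA fB :
  nseq n true ++ false :: (collf fA n n ++ [:: false]) ++ (collf fB n n ++ [:: false]) =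
  enc_SubIso (Eout n fA n) (Eout n fB n).
Proof. by rewrite /enc_SubIso /enc_coll /enc_unary !collf_enc // -[in RHS]catA. Qed.

Lemma decomp w n : lead w = n -> size w = n + 1 + n * n + n * n ->
  w = nseq n true ++ false :: (take (n * n) (drop (n + 1) w) ++ drop (n + 1 + n * n) w).
Proof.
move=> Lw Sw.
rewrite -{1}(cat_take_drop n w) -{1}Lw take_lead Lw.
rewrite (drop_nth false); last by rewrite Sw; lia.
have Nw : nth false w n = false by rewrite -Lw nth_lead // Lw Sw; lia.
rewrite Nw -{1}(cat_take_drop (n * n) (drop n.+1 w)) drop_drop addn1.
by congr (_ ++ _ :: (_ ++ drop _ _)); lia.
Qed.

Lemma GI_fwd w : GI_lang w -> SubIso_lang (bc_eval RED [:: w] [::]).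
Proof.
move=> [n [G [H [[sG iG] [sH iH] Ew iso]]]].
have Ew' : w = (nseq n true ++ [:: false]) ++ (enc_adj G ++ enc_adj H) by rewrite Ew.
have Lw : lead w = n by rewrite Ew' -catA lead_enc.
have Sw : size w = n + 1 + n * n + n * n.
  by rewrite Ew' !size_cat !size_enc_adj size_nseq /= addn1 addnA.
have FA : forall i j : 'I_n, nth false w (n + 1 + (i * n + j)) = G i j.
  move=> i j; have -> : n + 1 = size (nseq n true ++ [:: false]) by rewrite size_cat size_nseq.
  rewrite Ew' nth_cat_r nth_cat size_enc_adj ifT ?nth_enc_adj //.
  have := ltn_ord i; have := ltn_ord j; nia.
have FB : forall i j : 'I_n, nth false w (n + 1 + n * n + (i * n + j)) = H i j.
  move=> i j; have -> : n + 1 + n * n = size ((nseq n true ++ [:: false]) ++ enc_adj G).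
    by rewrite !size_cat size_nseq size_enc_adj.
  by rewrite Ew' catA nth_cat_r nth_enc_adj.
rewrite RED_eval Lw Sw eqxx /=.
set fA := fun a b => nth false w (n + 1 + (a * n + b)).
set fB := fun a b => nth false w (n + 1 + n * n + (a * n + b)).
have -> : chk fA fB n n.
  apply/chkP => k Hk; split.
  - by rewrite /fA (FA (Ordinal Hk) (Ordinal Hk)) iG.
  - by rewrite /fB (FB (Ordinal Hk) (Ordinal Hk)) iH.
  - move=> l Hl; rewrite /fA /fB (FA (Ordinal Hk) (Ordinal Hl)) (FA (Ordinal Hl) (Ordinal Hk)).
    by rewrite (FB (Ordinal Hk) (Ordinal Hl)) (FB (Ordinal Hl) (Ordinal Hk)) sG sH.
exists n, (Eout n fA n), (Eout n fB n); split; first by rewrite out_enc.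
apply/key.
- by move=> u v; rewrite /fA !FA sG.
- by move=> u; rewrite /fA FA iG.
- by move=> u v; rewrite /fB !FB sH.
- by move=> u; rewrite /fB FB iH.
case: iso => pi Hpi; exists pi => u v.
by rewrite /fA /fB FA FB Hpi.
Qed.

Lemma GI_bwd w : SubIso_lang (bc_eval RED [:: w] [::]) -> GI_lang w.
Proof.
move=> [n' [s1 [s2 []]]].
rewrite RED_eval.
set n := lead w.
set fA := fun a b => nth false w (n + 1 + (a * n + b)).
set fB := fun a b => nth false w (n + 1 + n * n + (a * n + b)).
case C: (_ && _); last by move=> /(congr1 size); rewrite /enc_SubIso /enc_unary !size_cat /=; lia.
move/andP: C => [/eqP Sw /chkP Ch].
rewrite out_enc => E.
have En := enc_SubIso_n E; subst n'.
have [E1 E2] := enc_SubIso_inj E; subst s1 s2 => sub.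
have sA : forall u v : 'I_n, fA u v = fA v u by move=> u v; have [_ _ /(_ v (ltn_ord v)) []] := Ch u (ltn_ord u).
have sB : forall u v : 'I_n, fB u v = fB v u by move=> u v; have [_ _ /(_ v (ltn_ord v)) []] := Ch u (ltn_ord u).
have rA : forall u : 'I_n, fA u u = false by move=> u; have [] := Ch u (ltn_ord u).
have rB : forall u : 'I_n, fB u u = false by move=> u; have [] := Ch u (ltn_ord u).
have [pi Hpi] := proj1 (key sA rA sB rB) sub.
exists n, (fun u v : 'I_n => fA u v), (fun u v : 'I_n => fB u v); split.
- by split; [move=> u v; exact: sA | move=> u; exact: rA].
- by split; [move=> u v; exact: sB | move=> u; exact: rB].
- rewrite {1}(decomp (erefl n) Sw) /enc_GI /enc_unary -catA /=.
  congr (_ ++ _ :: (_ ++ _)).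
  + apply: adj_eq; first by rewrite size_take size_drop Sw; case: ltnP => //; lia.
    move=> i j; rewrite nth_take ?nth_drop //.
    have := ltn_ord i; have := ltn_ord j; nia.
  + apply: adj_eq; first by rewrite size_drop Sw; lia.
    by move=> i j; rewrite nth_drop.
- by exists pi.
Qed.


Theorem mainTheorem1 : poly_reduces GI_lang SubIso_lang.
Proof.
exists (fun w => bc_eval RED [:: w] [::]); split; first by exists RED.
by move=> w; split; [exact: GI_fwd | exact: GI_bwd].
Qed.
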